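(* Let a target $T$ be fixed at a point $(x_T,y_T)\in\mathbb{R}^2$, and consider a UAV with dynamics $\dot x=V\cos\psi$, $\dot y=V\sin\psi$, $\dot\psi=\omega$, $V>0$ constant. Let $r(t)$ be the distance from the UAV to $T$, and let the control input be $$\omega=\begin{cases} k\left[V\cos\!\left(\pi-\sin^{-1}\!\left(\frac{r_a}{r(t)}\right)\right)-\dot r(t)\right], & r(t)\ge r_a,\\ 0,&\text{otherwise},\end{cases}$$ with constants $k>0$ and $r_a\ge 0$. Then the UAV moves inside the circle $C_a$ at most once, i.e., the set $\{t\ge 0: r(t)<r_a\}$ is either empty or a single interval.
   Context: $C_a$ is the circle centered at $T$ with radius $r_a$; the UAV is said to be inside $C_a$ if $r(t)<r_a$ and outside if $r(t)\ge r_a$. $\sin^{-1}$ is the principal arcsine. *)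

(* Defs.v *)
From Stdlib Require Export Reals.
From Coquelicot Require Export Coquelicot.
Open Scope R_scope.

Definition dist_to (xT yT : R) (x y : R -> R) (t : R) : R :=
  sqrt ((x t - xT) ^ 2 + (y t - yT) ^ 2).

Definition control (k V ra : R) (r : R -> R) (t : R) : R :=
  if Rle_dec ra (r t) then k * (V * cos (PI - asin (ra / r t)) - Derive r t)
  else 0.

(* Main.v *)
Require Import Defs.
From Stdlib Require Import Lra Psatz.

Lemma cont_eps (f : R -> R) (x : R) : continuous f x ->
  forall eps, 0 < eps -> exists del, 0 < del /\
    forall y, Rabs (y - x) < del -> Rabs (f y - f x) < eps.
Proof.
  intros H eps He.
  assert (Hc : continuity_pt f x) by (apply continuity_pt_filterlim; exact H).
  destruct (Hc eps He) as [alp [Ha Hb]].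
  exists alp; split; [exact Ha|].
  intros y Hy. destruct (Req_dec y x) as [->|Hne].
  - rewrite Rminus_eq_0, Rabs_R0; exact He.
  - apply (Hb y). split. split; [exact I| intro; apply Hne; auto]. exact Hy.
Qed.

Lemma deriv_pos_right (f : R -> R) (x d : R) : is_derive f x d -> 0 < d ->
  exists del, 0 < del /\ forall h, 0 < h < del -> f x < f (x + h).
Proof.
  intros H Hd. apply is_derive_Reals in H.
  destruct (H d Hd) as [del Hdel].
  exists (pos del); split; [apply cond_pos|].
  intros h [h0 h1].
  assert (Hh : h <> 0) by lra.
  assert (Ha : Rabs h < del) by (rewrite Rabs_right; lra).
  specialize (Hdel h Hh Ha).
  apply Rabs_def2 in Hdel. destruct Hdel as [_ Hdel].
  assert (0 < (f (x + h) - f x) / h) by lra.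
  assert (0 < (f (x+h) - f x)).
  { replace (f (x+h) - f x) with ((f (x + h) - f x) / h * h) by (field; lra).
    apply Rmult_lt_0_compat; lra. }
  lra.
Qed.

Fixpoint nest (f : nat -> R) (a0 b0 : R) (n : nat) : R * R :=
  match n with
  | O => (a0, b0)
  | S m => let p := nest f a0 b0 m in
           if Rle_dec (f m) ((fst p + snd p) / 2)
           then ((fst p + 3 * snd p) / 4, snd p)
           else (fst p, (3 * fst p + snd p) / 4)
  end.

Lemma nest_lt f a0 b0 : a0 < b0 -> forall n, fst (nest f a0 b0 n) < snd (nest f a0 b0 n).
Proof.
  intros H n; induction n; simpl; auto.
  destruct (Rle_dec _ _); simpl; lra.
Qed.

Lemma nest_step f a0 b0 : a0 < b0 -> forall n,
  fst (nest f a0 b0 n) <= fst (nest f a0 b0 (S n)) /\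
  snd (nest f a0 b0 (S n)) <= snd (nest f a0 b0 n) /\
  (f n < fst (nest f a0 b0 (S n)) \/ snd (nest f a0 b0 (S n)) < f n).
Proof.
  intros H n. pose proof (nest_lt f a0 b0 H n). simpl.
  destruct (Rle_dec _ _); simpl; lra.
Qed.

Lemma nest_mono f a0 b0 : a0 < b0 -> forall n k,
  fst (nest f a0 b0 n) <= fst (nest f a0 b0 (n + k)) /\
  snd (nest f a0 b0 (n + k)) <= snd (nest f a0 b0 n).
Proof.
  intros H n k; induction k.
  - rewrite Nat.add_0_r; lra.
  - rewrite Nat.add_succ_r. pose proof (nest_step f a0 b0 H (n + k)). lra.
Qed.

Lemma nest_ab f a0 b0 : a0 < b0 -> forall n m,
  fst (nest f a0 b0 n) <= snd (nest f a0 b0 m).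
Proof.
  intros H n m.
  destruct (Nat.le_ge_cases n m) as [Hl|Hl].
  - destruct (Nat.le_exists_sub n m Hl) as [k [-> _]].
    rewrite Nat.add_comm. pose proof (nest_mono f a0 b0 H n k).
    pose proof (nest_lt f a0 b0 H (n + k)). lra.
  - destruct (Nat.le_exists_sub m n Hl) as [k [-> _]].
    rewrite Nat.add_comm. pose proof (nest_mono f a0 b0 H m k).
    pose proof (nest_lt f a0 b0 H (m + k)). lra.
Qed.

Lemma uncount (f : nat -> R) (a b : R) : a < b ->
  exists c, a < c < b /\ forall n, f n <> c.
Proof.
  intros Hab.
  set (a0 := (3 * a + b) / 4). set (b0 := (a + 3 * b) / 4).
  assert (H0 : a0 < b0) by (unfold a0, b0; lra).
  set (E := fun z => exists n, z = fst (nest f a0 b0 n)).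
  assert (Hb : bound E).
  { exists b0. intros z [n ->]. apply (nest_ab f a0 b0 H0 n 0). }
  assert (He : exists z, E z) by (exists a0; exists 0%nat; reflexivity).
  destruct (completeness E Hb He) as [c [Hub Hlub]].
  assert (Hlo : forall n, fst (nest f a0 b0 n) <= c).
  { intros n; apply Hub; exists n; reflexivity. }
  assert (Hhi : forall m, c <= snd (nest f a0 b0 m)).
  { intros m; apply Hlub. intros z [n ->]. apply nest_ab; exact H0. }
  exists c; split.
  - pose proof (Hlo 0%nat); pose proof (Hhi 0%nat); simpl in *; unfold a0, b0 in *; lra.
  - intros n Hn. pose proof (nest_step f a0 b0 H0 n).
    pose proof (Hlo (S n)); pose proof (Hhi (S n)). lra.
Qed.

From Stdlib Require Import Classical.

Lemma lub_approx (S : R -> Prop) (T : R) : is_lub S T -> forall e, 0 < e ->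
  exists t, S t /\ T - e < t.
Proof.
  intros [Hub Hlub] e He.
  apply NNPP; intro Hn.
  assert (Hu : is_upper_bound S (T - e)).
  { intros z Hz. destruct (Rle_dec z (T - e)) as [|Hz']; auto.
    exfalso; apply Hn; exists z; split; auto; lra. }
  specialize (Hlub _ Hu); lra.
Qed.

Lemma CE_strict (G : R -> R) (E : nat -> R) (u v : R) : u < v ->
  (forall t, u <= t <= v -> continuous G t) ->
  (forall t, u <= t < v -> (forall n, E n <> t) -> exists d, 0 < d /\ is_derive G t d) ->
  G u <= G v.
Proof.
  intros Huv Hc Hd.
  destruct (Rle_dec (G u) (G v)) as [|Hn]; auto. exfalso.
  destruct (uncount (fun n => G (E n)) (G v) (G u)) as [c [[Hc1 Hc2] Hcn]]; [lra|].
  set (S := fun t => u <= t <= v /\ c <= G t).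
  assert (Hb : bound S) by (exists v; intros z [[_ Hz] _]; exact Hz).
  assert (He : exists z, S z) by (exists u; split; lra).
  destruct (completeness S Hb He) as [T HT].
  assert (HuT : u <= T) by (apply (proj1 HT); split; lra).
  assert (HTv : T <= v) by (apply (proj2 HT); intros z [[_ Hz] _]; exact Hz).
  assert (HGT1 : c <= G T).
  { destruct (Rle_dec c (G T)) as [|Hlt]; auto. exfalso.
    destruct (cont_eps G T (Hc T (conj HuT HTv)) (c - G T)) as [del [Hdel Hdl]]; [lra|].
    destruct (lub_approx S T HT del Hdel) as [t [[Ht1 Ht2] Ht3]].
    assert (t <= T) by (apply (proj1 HT); split; auto).
    assert (Rabs (t - T) < del) by (rewrite Rabs_left1; lra).
    specialize (Hdl t H0). apply Rabs_def2 in Hdl. lra. }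
  assert (HTv' : T < v).
  { destruct (Req_dec T v) as [->|]; [lra|lra]. }
  assert (Hright : forall t, T < t <= v -> G t < c).
  { intros t Ht. destruct (Rlt_dec (G t) c) as [|Hge]; auto. exfalso.
    assert (t <= T) by (apply (proj1 HT); split; lra). lra. }
  assert (HGT2 : G T <= c).
  { destruct (Rle_dec (G T) c) as [|Hlt]; auto. exfalso.
    destruct (cont_eps G T (Hc T (conj HuT HTv)) (G T - c)) as [del [Hdel Hdl]]; [lra|].
    set (t := T + Rmin del (v - T) / 2).
    assert (Hm1 : Rmin del (v - T) <= del) by apply Rmin_l.
    assert (Hm2 : Rmin del (v - T) <= v - T) by apply Rmin_r.
    assert (Hm3 : 0 < Rmin del (v - T)) by (apply Rmin_glb_lt; lra).
    assert (Rabs (t - T) < del) by (unfold t; rewrite Rabs_right; lra).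
    specialize (Hdl t H). apply Rabs_def2 in Hdl.
    specialize (Hright t). unfold t in *; lra. }
  assert (HEn : forall n, E n <> T).
  { intros n Hn'. apply (Hcn n). simpl. rewrite Hn'. lra. }
  destruct (Hd T (conj HuT HTv') HEn) as [d [Hd0 HdT]].
  destruct (deriv_pos_right G T d HdT Hd0) as [del [Hdel Hdl]].
  assert (Hm1 : Rmin del (v - T) <= del) by apply Rmin_l.
  assert (Hm2 : Rmin del (v - T) <= v - T) by apply Rmin_r.
  assert (Hm3 : 0 < Rmin del (v - T)) by (apply Rmin_glb_lt; lra).
  specialize (Hdl (Rmin del (v - T) / 2)). specialize (Hright (T + Rmin del (v - T) / 2)).
  lra.
Qed.

Lemma CE_weak (G : R -> R) (E : nat -> R) (u v : R) : u <= v ->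
  (forall t, u <= t <= v -> continuous G t) ->
  (forall t, u <= t < v -> (forall n, E n <> t) -> exists d, 0 <= d /\ is_derive G t d) ->
  G u <= G v.
Proof.
  intros Huv Hc Hd. destruct (Req_dec u v) as [->|Hne]; [lra|].
  apply Rnot_lt_le; intro Hlt.
  set (e := (G u - G v) / (2 * (v - u) )).
  assert (He : 0 < e) by (unfold e; apply Rdiv_lt_0_compat; lra).
  assert (H := CE_strict (fun t => G t + e * t) E u v).
  assert (G u + e * u <= G v + e * v).
  { apply H; [lra| |].
    - intros t Ht. apply (continuous_plus (fun t => G t) (fun t => e * t)); [apply Hc; auto|].
      apply ex_derive_continuous. auto_derive. exact I.
    - intros t Ht Hn. destruct (Hd t Ht Hn) as [d [Hd0 Hdd]].
      exists (d + e * 1); split; [lra|].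
      apply (is_derive_plus (fun t => G t) (fun t => e * t)); auto.
      auto_derive; [exact I| ring]. }
  assert (e * (v - u) = (G u - G v) / 2) by (unfold e; field; lra). nra.
Qed.

Lemma CE_const (G : R -> R) (E : nat -> R) (u v : R) : u <= v ->
  (forall t, u <= t <= v -> continuous G t) ->
  (forall t, u <= t < v -> (forall n, E n <> t) -> is_derive G t 0) ->
  G u = G v.
Proof.
  intros Huv Hc Hd. apply Rle_antisym.
  - apply (CE_weak G E u v Huv Hc). intros t Ht Hn. exists 0; split; [lra|auto].
  - assert (H := CE_weak (fun t => - G t) E u v Huv).
    assert (- G u <= - G v); [|lra].
    apply H.
    + intros t Ht. apply (continuous_opp (fun t => G t)); auto.
    + intros t Ht Hn. exists (- 0); split; [lra|].
      apply (is_derive_opp (fun t => G t)); auto.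
Qed.

Lemma cont_der (f : R -> R) x l : is_derive f x l -> continuous f x.
Proof. intros H. apply (ex_derive_continuous f). exists l; exact H. Qed.

Lemma first_zero (phi : R -> R) (u v : R) : u < v ->
  (forall t, u <= t <= v -> continuous phi t) -> 0 < phi u -> phi v <= 0 ->
  exists c, u < c <= v /\ phi c = 0 /\ forall t, u <= t < c -> 0 < phi t.
Proof.
  intros Huv Hc Hu Hv.
  set (S := fun t => u <= t <= v /\ forall s, u <= s <= t -> 0 < phi s).
  assert (Hb : bound S) by (exists v; intros z [[_ Hz] _]; exact Hz).
  assert (He : exists z, S z).
  { exists u; split; [lra|]. intros s Hs. replace s with u by lra; auto. }
  destruct (completeness S Hb He) as [T HT].
  assert (HuT : u <= T) by (apply (proj1 HT); destruct He as [z Hz]; split; [lra|];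
    intros s Hs; replace s with u by lra; auto).
  assert (HTv : T <= v) by (apply (proj2 HT); intros z [[_ Hz] _]; exact Hz).
  assert (Hleft : forall t, u <= t < T -> 0 < phi t).
  { intros t Ht. destruct (lub_approx S T HT (T - t)) as [z [[Hz1 Hz2] Hz3]]; [lra|].
    apply Hz2; lra. }
  assert (HuT' : u < T).
  { destruct (cont_eps phi u (Hc u (conj (Rle_refl u) (Rlt_le _ _ Huv))) (phi u)) as [del [Hdel Hdl]]; [lra|].
    assert (Hm1 : Rmin del (v - u) <= del) by apply Rmin_l.
    assert (Hm2 : Rmin del (v - u) <= v - u) by apply Rmin_r.
    assert (Hm3 : 0 < Rmin del (v - u)) by (apply Rmin_glb_lt; lra).
    assert (S (u + Rmin del (v - u) / 2)).
    { split; [lra|]. intros s Hs.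
      assert (Rabs (s - u) < del) by (rewrite Rabs_right; lra).
      specialize (Hdl s H). apply Rabs_def2 in Hdl. lra. }
    assert (u + Rmin del (v - u) / 2 <= T) by (apply (proj1 HT); auto). lra. }
  assert (H1 : 0 <= phi T).
  { destruct (Rle_dec 0 (phi T)) as [|Hlt]; auto. exfalso.
    destruct (cont_eps phi T (Hc T (conj HuT HTv)) (- phi T)) as [del [Hdel Hdl]]; [lra|].
    assert (Hm1 : Rmin del (T - u) <= del) by apply Rmin_l.
    assert (Hm2 : Rmin del (T - u) <= T - u) by apply Rmin_r.
    assert (Hm3 : 0 < Rmin del (T - u)) by (apply Rmin_glb_lt; lra).
    assert (Rabs (T - Rmin del (T - u) / 2 - T) < del) by (rewrite Rabs_left; lra).
    specialize (Hdl _ H). apply Rabs_def2 in Hdl.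
    specialize (Hleft (T - Rmin del (T - u) / 2)). lra. }
  assert (H2 : phi T <= 0).
  { destruct (Rle_dec (phi T) 0) as [|Hlt]; auto. exfalso.
    assert (HTv' : T < v) by (destruct (Req_dec T v) as [->|]; lra).
    destruct (cont_eps phi T (Hc T (conj HuT HTv)) (phi T)) as [del [Hdel Hdl]]; [lra|].
    assert (Hm1 : Rmin del (v - T) <= del) by apply Rmin_l.
    assert (Hm2 : Rmin del (v - T) <= v - T) by apply Rmin_r.
    assert (Hm3 : 0 < Rmin del (v - T)) by (apply Rmin_glb_lt; lra).
    assert (S (T + Rmin del (v - T) / 2)).
    { split; [lra|]. intros s Hs.
      destruct (Rlt_dec s T); [apply Hleft; lra|].
      assert (Rabs (s - T) < del) by (rewrite Rabs_right; lra).
      specialize (Hdl s H). apply Rabs_def2 in Hdl. lra. }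
    assert (T + Rmin del (v - T) / 2 <= T) by (apply (proj1 HT); auto). lra. }
  exists T; split; [lra|]; split; [lra|auto].
Qed.

Lemma last_zero (phi : R -> R) (u v : R) : u < v ->
  (forall t, u <= t <= v -> continuous phi t) -> phi u <= 0 -> 0 < phi v ->
  exists c, u <= c < v /\ phi c = 0 /\ forall t, c < t <= v -> 0 < phi t.
Proof.
  intros Huv Hc Hu Hv.
  destruct (first_zero (fun t => phi (- t)) (- v) (- u)) as [c [Hc1 [Hc2 Hc3]]].
  - lra.
  - intros t Ht. apply (continuous_comp (fun t => - t) phi).
    + apply (cont_der _ _ (-1)); auto_derive; [exact I| ring].
    + simpl. apply Hc; lra.
  - rewrite Ropp_involutive; auto.
  - rewrite Ropp_involutive; auto.
  - exists (- c). split; [lra|]. split; auto.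
    intros t Ht. specialize (Hc3 (- t)). rewrite Ropp_involutive in Hc3. apply Hc3; lra.
Qed.

Definition Pf (x y psi : R -> R) (xT yT : R) t := (x t - xT) * cos (psi t) + (y t - yT) * sin (psi t).
Definition Qf (x y psi : R -> R) (xT yT : R) t := - (x t - xT) * sin (psi t) + (y t - yT) * cos (psi t).
Definition qf (x y : R -> R) (xT yT : R) t := (x t - xT)^2 + (y t - yT)^2.
Definition Hf (x y psi : R -> R) (xT yT ra : R) t :=
  Pf x y psi xT yT t + sqrt (qf x y xT yT t - ra^2).

Lemma r_deriv (x y psi : R -> R) xT yT V t :
  is_derive x t (V * cos (psi t)) -> is_derive y t (V * sin (psi t)) ->
  0 < qf x y xT yT t ->
  is_derive (dist_to xT yT x y) t (V * Pf x y psi xT yT t / dist_to xT yT x y t).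
Proof.
  intros Hx Hy Hq. unfold dist_to, Pf. unfold qf in Hq.
  auto_derive.
  - repeat split; try (eexists; eassumption). lra.
  - replace (Derive (fun x0 => x x0) t) with (V * cos (psi t)) by (symmetry; apply is_derive_unique; exact Hx).
    replace (Derive (fun x0 => y x0) t) with (V * sin (psi t)) by (symmetry; apply is_derive_unique; exact Hy).
    replace ((x t + - xT) * ((x t + - xT) * 1) + (y t + - yT) * ((y t + - yT) * 1))
      with ((x t - xT) ^ 2 + (y t - yT) ^ 2) by ring.
    assert (0 < sqrt ((x t - xT) ^ 2 + (y t - yT) ^ 2)) by (apply sqrt_lt_R0; lra).
    field. lra.
Qed.

Lemma H_deriv (x y psi : R -> R) xT yT ra V w t :
  is_derive x t (V * cos (psi t)) -> is_derive y t (V * sin (psi t)) ->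
  is_derive psi t w ->
  0 < qf x y xT yT t - ra^2 ->
  is_derive (Hf x y psi xT yT ra) t
    (V + w * Qf x y psi xT yT t + V * Pf x y psi xT yT t / sqrt (qf x y xT yT t - ra^2)).
Proof.
  intros Hx Hy Hp Hq. unfold Hf, Pf, Qf. unfold qf in *.
  auto_derive.
  - repeat split; try (eexists; eassumption). lra.
  - replace (Derive (fun x0 => x x0) t) with (V * cos (psi t)) by (symmetry; apply is_derive_unique; exact Hx).
    replace (Derive (fun x0 => y x0) t) with (V * sin (psi t)) by (symmetry; apply is_derive_unique; exact Hy).
    replace (Derive (fun x0 => psi x0) t) with w by (symmetry; apply is_derive_unique; exact Hp).
    replace ((x t + - xT) * ((x t + - xT) * 1) + (y t + - yT) * ((y t + - yT) * 1) + - (ra * (ra * 1)))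
      with ((x t - xT) ^ 2 + (y t - yT) ^ 2 - ra ^ 2) by ring.
    assert (0 < sqrt ((x t - xT) ^ 2 + (y t - yT) ^ 2 - ra ^ 2)) by (apply sqrt_lt_R0; lra).
    pose proof (sin2_cos2 (psi t)). unfold Rsqr in *.
    set (S := sqrt _) in *. set (c := cos (psi t)) in *. set (s := sin (psi t)) in *.
    match goal with |- ?L = ?R => assert (E : L - R = V * (c*c + s*s - 1)) by (field; lra) end.
    replace (c*c + s*s - 1) with 0 in E by lra. lra.
Qed.

Lemma c_plus (f g : R -> R) t : continuous f t -> continuous g t -> continuous (fun s => f s + g s) t.
Proof. intros; apply (continuous_plus f g); auto. Qed.
Lemma c_mult (f g : R -> R) t : continuous f t -> continuous g t -> continuous (fun s => f s * g s) t.
Proof. intros; apply (continuous_mult f g); auto. Qed.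
Lemma c_minus (f g : R -> R) t : continuous f t -> continuous g t -> continuous (fun s => f s - g s) t.
Proof. intros; apply (continuous_minus f g); auto. Qed.
Lemma c_const (c : R) t : continuous (fun _ : R => c) t.
Proof. apply continuous_const. Qed.
Lemma c_pow2 (f : R -> R) t : continuous f t -> continuous (fun s => f s ^ 2) t.
Proof. intros H. apply (continuous_comp f (fun z => z ^ 2)); auto.
  apply (cont_der _ _ (2 * f t)). auto_derive; [exact I|ring]. Qed.
Lemma c_min (f g : R -> R) t : continuous f t -> continuous g t -> continuous (fun s => Rmin (f s) (g s)) t.
Proof. intros Hf Hg.
  apply (continuous_ext (fun s => (f s + g s - Rabs (f s - g s)) / 2)).
  - intros s. unfold Rmin. destruct (Rle_dec (f s) (g s)).
    + rewrite Rabs_left1; lra.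
    + rewrite Rabs_right; lra.
  - apply (continuous_mult (fun s => f s + g s - Rabs (f s - g s)) (fun _ => /2)); [|apply continuous_const].
    apply (continuous_minus (fun s => f s + g s) (fun s => Rabs (f s - g s))).
    apply (continuous_plus f g); auto.
    apply (continuous_Rabs_comp (fun s => f s - g s)).
    apply (continuous_minus f g); auto.
Qed.

Lemma c_q (x y : R -> R) xT yT t : continuous x t -> continuous y t ->
  continuous (qf x y xT yT) t.
Proof.
  intros Hx Hy. unfold qf.
  apply (c_plus (fun s => (x s - xT)^2) (fun s => (y s - yT)^2));
  apply c_pow2; apply c_minus; auto; apply c_const.
Qed.

Lemma c_r (x y : R -> R) xT yT t : continuous x t -> continuous y t ->
  continuous (dist_to xT yT x y) t.
Proof.
  intros Hx Hy. unfold dist_to. apply (continuous_sqrt_comp (qf x y xT yT)).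
  apply c_q; auto.
Qed.

Lemma c_P (x y psi : R -> R) xT yT t : continuous x t -> continuous y t -> continuous psi t ->
  continuous (Pf x y psi xT yT) t.
Proof.
  intros Hx Hy Hp. unfold Pf.
  apply (c_plus (fun s => (x s - xT) * cos (psi s)) (fun s => (y s - yT) * sin (psi s))).
  - apply (c_mult (fun s => x s - xT)); [apply c_minus; auto; apply c_const|].
    apply (continuous_cos_comp psi); auto.
  - apply (c_mult (fun s => y s - yT)); [apply c_minus; auto; apply c_const|].
    apply (continuous_sin_comp psi); auto.
Qed.

Lemma c_H (x y psi : R -> R) xT yT ra t : continuous x t -> continuous y t -> continuous psi t ->
  continuous (Hf x y psi xT yT ra) t.
Proof.
  intros Hx Hy Hp. unfold Hf.
  apply (c_plus (Pf x y psi xT yT) (fun s => sqrt (qf x y xT yT s - ra ^ 2))).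
  - apply c_P; auto.
  - apply (continuous_sqrt_comp (fun s => qf x y xT yT s - ra ^ 2)).
    apply (c_minus (qf x y xT yT)); [apply c_q; auto| apply c_const].
Qed.

Lemma deriv_pos_left (f : R -> R) (x d : R) : is_derive f x d -> 0 < d ->
  exists del, 0 < del /\ forall h, 0 < h < del -> f (x - h) < f x.
Proof.
  intros H Hd. apply is_derive_Reals in H.
  destruct (H d Hd) as [del Hdel].
  exists (pos del); split; [apply cond_pos|].
  intros h [h0 h1].
  assert (Hh : - h <> 0) by lra.
  assert (Ha : Rabs (- h) < del) by (rewrite Rabs_left; lra).
  specialize (Hdel (- h) Hh Ha).
  apply Rabs_def2 in Hdel. destruct Hdel as [_ Hdel].
  assert (0 < (f (x + - h) - f x) / - h) by lra.
  assert (0 < (f x - f (x + - h))).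
  { replace (f x - f (x + - h)) with ((f (x + - h) - f x) / - h * h) by (field; lra).
    apply Rmult_lt_0_compat; lra. }
  replace (x - h) with (x + - h) by ring. lra.
Qed.

Lemma straight (x : R -> R) (w : R) u v : u <= v ->
  (forall t, u <= t <= v -> is_derive x t w) -> x v - x u = w * (v - u).
Proof.
  intros Huv Hd.
  assert (H := CE_const (fun t => x t - w * t) (fun _ => v + 1) u v Huv).
  assert (x u - w * u = x v - w * v); [|lra].
  apply H.
  - intros t Ht. apply (c_minus x (fun t => w * t)).
    + apply (cont_der _ _ w); auto.
    + apply (cont_der _ _ w). auto_derive; [exact I|ring].
  - intros t Ht _.
    replace 0 with (w - w * 1) by ring.
    apply (is_derive_minus x (fun t => w * t)); [apply Hd; lra|].
    auto_derive; [exact I|ring].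
Qed.

Theorem lemma3 (xT yT V k ra : R) (x y psi : R -> R)
  (hV : 0 < V) (hk : 0 < k) (hra : 0 <= ra)
  (* continuity of the state on t >= 0 *)
  (hcx : forall t, 0 <= t -> continuous x t)
  (hcy : forall t, 0 <= t -> continuous y t)
  (hcpsi : forall t, 0 <= t -> continuous psi t)
  (* kinematics *)
  (hx : forall t, 0 <= t -> is_derive x t (V * cos (psi t)))
  (hy : forall t, 0 <= t -> is_derive y t (V * sin (psi t)))
  (* heading dynamics psi' = omega, except possibly at countably many
     (switching) instants *)
  (hpsi : exists E : nat -> R, forall t, 0 <= t -> (forall n, E n <> t) ->
            is_derive psi t (control k V ra (dist_to xT yT x y) t)) :
  forall t1 t2 t3, 0 <= t1 -> t1 <= t2 -> t2 <= t3 ->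
    dist_to xT yT x y t1 < ra -> dist_to xT yT x y t3 < ra ->
    dist_to xT yT x y t2 < ra.
Proof.
  intros t1 t2 t3 H0 H12 H23 Hr1 Hr3.
  destruct hpsi as [E hE].
  set (r := dist_to xT yT x y) in *.
  apply Rnot_le_lt; intro Hr2.
  assert (Hrpos : forall t, 0 <= r t) by (intro t; apply sqrt_pos).
  assert (Hrq : forall t, r t * r t = qf x y xT yT t).
  { intro t. unfold r, dist_to. apply sqrt_sqrt. unfold qf.
    pose proof (pow2_ge_0 (x t - xT)); pose proof (pow2_ge_0 (y t - yT)); lra. }
  assert (Hra : 0 < ra) by (pose proof (Hrpos t1); lra).
  assert (H12' : t1 < t2) by (destruct (Req_dec t1 t2) as [->|]; lra).
  assert (H23' : t2 < t3) by (destruct (Req_dec t2 t3) as [->|]; lra).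
  assert (Hcr : forall t, 0 <= t -> continuous r t) by (intros; apply c_r; auto).
  assert (Hpc : forall u v, 0 <= u -> u <= v -> (forall t, u < t < v -> r t < ra) -> psi u = psi v).
  { intros u v Hu Huv Hin.
    apply (CE_const psi (fun n => match n with O => u | S m => E m end) u v Huv).
    - intros t Ht; apply hcpsi; lra.
    - intros t Ht Hn.
      assert (Htu : u < t) by (specialize (Hn O); simpl in Hn; lra).
      assert (HEt : forall n, E n <> t) by (intro n; apply (Hn (S n))).
      specialize (hE t ltac:(lra) HEt). unfold control in hE.
      destruct (Rle_dec ra (r t)) as [Hle|]; [|exact hE].
      specialize (Hin t ltac:(lra)). lra. }
  assert (Hcphi : forall t, 0 <= t -> continuous (fun t => ra - r t) t).
  { intros t Ht. apply (c_minus (fun _ => ra) r); [apply c_const|auto]. }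
  destruct (first_zero (fun t => ra - r t) t1 t2 H12') as [a [Ha1 [Ha2 Ha3]]].
  { intros t Ht; apply Hcphi; lra. } { lra. } { lra. }
  destruct (last_zero (fun t => ra - r t) t2 t3 H23') as [b [Hb1 [Hb2 Hb3]]].
  { intros t Ht; apply Hcphi; lra. } { lra. } { lra. }
  simpl in Ha2, Ha3, Hb2, Hb3.
  assert (Hsc : forall z, cos z * cos z + sin z * sin z = 1).
  { intro z. pose proof (sin2_cos2 z). unfold Rsqr in *. lra. }
  assert (HPa : 0 < Pf x y psi xT yT a).
  { assert (Hpsi : forall t, t1 <= t <= a -> psi t = psi a).
    { intros t Ht. apply Hpc; [lra|lra|]. intros z Hz. specialize (Ha3 z ltac:(lra)). lra. }
    assert (Ex : x a - x t1 = (V * cos (psi a)) * (a - t1)).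
    { apply straight; [lra|]. intros t Ht. rewrite <- (Hpsi t Ht). apply hx; lra. }
    assert (Ey : y a - y t1 = (V * sin (psi a)) * (a - t1)).
    { apply straight; [lra|]. intros t Ht. rewrite <- (Hpsi t Ht). apply hy; lra. }
    assert (Hq1 : qf x y xT yT t1 < ra * ra).
    { rewrite <- Hrq. pose proof (Hrpos t1). nra. }
    assert (Hqa : qf x y xT yT a = ra * ra) by (rewrite <- Hrq; replace (r a) with ra by lra; ring).
    unfold qf, Pf in *.
    set (c := cos (psi a)) in *. set (s := sin (psi a)) in *.
    set (d := a - t1) in *.
    assert (E1 : (x t1 - xT) ^ 2 + (y t1 - yT) ^ 2 =
      (x a - xT) ^ 2 + (y a - yT) ^ 2 - 2 * V * d * ((x a - xT) * c + (y a - yT) * s)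
      + V * V * d * d * (c * c + s * s)).
    { replace (x t1) with (x a - V * c * d) by lra. replace (y t1) with (y a - V * s * d) by lra. ring. }
    assert (Hcs : c * c + s * s = 1) by (unfold c, s; apply Hsc).
    rewrite Hcs in E1.
    assert (Hd : 0 < d) by (unfold d; lra).
    assert (0 < 2 * V * d * ((x a - xT) * c + (y a - yT) * s)) by nra.
    assert (0 < 2 * V * d) by nra.
    apply (Rmult_lt_reg_l (2 * V * d)); lra. }
  assert (HPb : Pf x y psi xT yT b < 0).
  { assert (Hpsi : forall t, b <= t <= t3 -> psi t = psi b).
    { intros t Ht. symmetry. apply Hpc; [lra|lra|]. intros z Hz. specialize (Hb3 z ltac:(lra)). lra. }
    assert (Ex : x t3 - x b = (V * cos (psi b)) * (t3 - b)).
    { apply straight; [lra|]. intros t Ht. rewrite <- (Hpsi t Ht). apply hx; lra. }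
    assert (Ey : y t3 - y b = (V * sin (psi b)) * (t3 - b)).
    { apply straight; [lra|]. intros t Ht. rewrite <- (Hpsi t Ht). apply hy; lra. }
    assert (Hq1 : qf x y xT yT t3 < ra * ra).
    { rewrite <- Hrq. pose proof (Hrpos t3). nra. }
    assert (Hqb : qf x y xT yT b = ra * ra) by (rewrite <- Hrq; replace (r b) with ra by lra; ring).
    unfold qf, Pf in *.
    set (c := cos (psi b)) in *. set (s := sin (psi b)) in *.
    set (d := t3 - b) in *.
    assert (E1 : (x t3 - xT) ^ 2 + (y t3 - yT) ^ 2 =
      (x b - xT) ^ 2 + (y b - yT) ^ 2 + 2 * V * d * ((x b - xT) * c + (y b - yT) * s)
      + V * V * d * d * (c * c + s * s)).
    { replace (x t3) with (x b + V * c * d) by lra. replace (y t3) with (y b + V * s * d) by lra. ring. }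
    assert (Hcs : c * c + s * s = 1) by (unfold c, s; apply Hsc).
    rewrite Hcs in E1.
    assert (Hd : 0 < d) by (unfold d; lra).
    assert (2 * V * d * ((x b - xT) * c + (y b - yT) * s) < 0) by nra.
    assert (0 < 2 * V * d) by nra.
    apply (Rmult_lt_reg_l (2 * V * d)); lra. }
  assert (Hab : a < b).
  { destruct (Req_dec a b) as [e|]; [rewrite e in HPa; lra| lra]. }
  assert (Hqr : forall t, r t = ra -> qf x y xT yT t = ra * ra).
  { intros t Ht. rewrite <- Hrq, Ht. ring. }
  assert (HHr : forall t, r t = ra -> Hf x y psi xT yT ra t = Pf x y psi xT yT t).
  { intros t Ht. unfold Hf. rewrite (Hqr t Ht).
    replace (ra * ra - ra ^ 2) with 0 by ring. rewrite sqrt_0. ring. }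
  assert (Hrd : forall t, 0 <= t -> 0 < qf x y xT yT t ->
     is_derive r t (V * Pf x y psi xT yT t / r t)).
  { intros t Ht Hq. apply r_deriv; auto. }
  assert (Hra_a : r a = ra) by lra.
  assert (Hra_b : r b = ra) by lra.
  destruct (deriv_pos_right r a (V * Pf x y psi xT yT a / r a)) as [del1 [Hdel1 Hd1]].
  { apply Hrd; [lra|]. rewrite (Hqr a Hra_a). nra. }
  { rewrite Hra_a. apply Rdiv_lt_0_compat; nra. }
  destruct (cont_eps (Hf x y psi xT yT ra) a (c_H x y psi xT yT ra a (hcx a ltac:(lra)) (hcy a ltac:(lra)) (hcpsi a ltac:(lra))) (Hf x y psi xT yT ra a)) as [del2 [Hdel2 Hd2]].
  { rewrite (HHr a Hra_a). lra. }
  set (m := Rmin del1 (Rmin del2 (b - a))).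
  assert (Hm1 : m <= del1) by apply Rmin_l.
  assert (Hm2 : m <= del2) by (unfold m; eapply Rle_trans; [apply Rmin_r| apply Rmin_l]).
  assert (Hm3 : m <= b - a) by (unfold m; eapply Rle_trans; [apply Rmin_r| apply Rmin_r]).
  assert (Hm0 : 0 < m) by (unfold m; repeat apply Rmin_glb_lt; lra).
  set (a' := a + m / 2).
  assert (Hra' : ra < r a').
  { specialize (Hd1 (m / 2) ltac:(lra)). fold a' in Hd1. lra. }
  assert (HHa' : 0 < Hf x y psi xT yT ra a').
  { assert (Rabs (a' - a) < del2) by (unfold a'; rewrite Rabs_right; lra).
    specialize (Hd2 a' H). apply Rabs_def2 in Hd2. lra. }
  destruct (first_zero (fun t => Rmin (Hf x y psi xT yT ra t) (r t - ra)) a' b) as [c [Hc1 [Hc2 Hc3]]].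
  { unfold a'; lra. }
  { intros t Ht. apply (c_min (Hf x y psi xT yT ra) (fun t => r t - ra)).
    - apply c_H; [apply hcx|apply hcy|apply hcpsi]; unfold a' in *; lra.
    - apply (c_minus r (fun _ => ra)); [apply Hcr; unfold a' in *; lra| apply c_const]. }
  { apply Rmin_glb_lt; lra. }
  { eapply Rle_trans; [apply Rmin_l|]. rewrite (HHr b Hra_b). lra. }
  simpl in Hc2, Hc3.
  assert (Hin : forall t, a' <= t < c -> 0 < Hf x y psi xT yT ra t /\ ra < r t).
  { intros t Ht. specialize (Hc3 t Ht).
    pose proof (Rmin_l (Hf x y psi xT yT ra t) (r t - ra)).
    pose proof (Rmin_r (Hf x y psi xT yT ra t) (r t - ra)). lra. }
  assert (Ha'0 : 0 <= a') by (unfold a'; lra).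
  set (C := k * V + 1).
  set (G := fun t => Hf x y psi xT yT ra t * exp (C * t)).
  assert (HG : G a' <= G c).
  { apply (CE_weak G E a' c); [lra| |].
    - intros t Ht. unfold G.
      apply (c_mult (Hf x y psi xT yT ra) (fun t => exp (C * t))).
      + apply c_H; [apply hcx|apply hcy|apply hcpsi]; lra.
      + apply (cont_der _ _ (C * exp (C * t))). auto_derive; [exact I|ring].
    - intros t Ht HEt.
      destruct (Hin t Ht) as [HHt Hrt].
      assert (Ht0 : 0 <= t) by lra.
      specialize (hE t Ht0 HEt).
      assert (Hqt : ra * ra < qf x y xT yT t) by (rewrite <- Hrq; nra).
      assert (Hqt' : 0 < qf x y xT yT t - ra ^ 2) by lra.
      assert (Hrdt := Hrd t Ht0 ltac:(nra)).
      assert (HD := H_deriv x y psi xT yT ra V _ t (hx t Ht0) (hy t Ht0) hE Hqt').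
      assert (Hexp : is_derive (fun t => exp (C * t)) t (C * exp (C * t))).
      { auto_derive; [exact I|ring]. }
      assert (HDG := is_derive_mult _ _ t _ _ HD Hexp ltac:(intros; apply Rmult_comm)).
      eexists; split; [|exact HDG].
      unfold control in *.
      destruct (Rle_dec ra (r t)) as [_|]; [|lra].
      rewrite (is_derive_unique _ _ _ Hrdt).
      set (S := sqrt (qf x y xT yT t - ra ^ 2)) in *.
      set (P := Pf x y psi xT yT t) in *.
      set (Q := Qf x y psi xT yT t) in *.
      set (rt := r t) in *.
      assert (HSS : S * S = qf x y xT yT t - ra ^ 2) by (apply sqrt_sqrt; lra).
      assert (HS : 0 < S) by (apply sqrt_lt_R0; lra).
      assert (Hrt0 : 0 < rt) by lra.
      assert (Hcos : cos (PI - asin (ra / rt)) = - (S / rt)).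
      { rewrite Rtrigo_facts.cos_pi_minus. rewrite cos_asin.
        - f_equal. apply sqrt_lem_1.
          + unfold Rsqr. assert (ra / rt * (ra / rt) < 1); [|lra].
            replace (ra / rt * (ra / rt)) with ((ra * ra) / (rt * rt)) by (field; lra).
            apply (Rmult_lt_reg_r (rt * rt)); [nra|]. unfold Rdiv. rewrite Rmult_assoc, Rinv_l; nra.
          + apply Rlt_le, Rdiv_lt_0_compat; lra.
          + unfold Rsqr. replace (S / rt * (S / rt)) with ((S * S) / (rt * rt)) by (field; lra).
            rewrite HSS. rewrite <- (Hrq t). fold rt. field. lra.
        - split.
          + assert (0 <= ra / rt) by (apply Rlt_le, Rdiv_lt_0_compat; lra). lra.
          + apply (Rmult_le_reg_r rt); [lra|]. unfold Rdiv. rewrite Rmult_assoc, Rinv_l; lra. }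
      rewrite Hcos.
      assert (HPQ : P * P + Q * Q = rt * rt).
      { unfold P, Q, rt. rewrite Hrq. unfold Pf, Qf, qf.
        pose proof (Hsc (psi t)).
        set (cc := cos (psi t)) in *. set (ss := sin (psi t)) in *.
        transitivity (((x t - xT)^2 + (y t - yT)^2) * (cc * cc + ss * ss)); [ring|].
        rewrite H. ring. }
      assert (HQ : Q <= rt) by nra.
      assert (HHdef : Hf x y psi xT yT ra t = P + S) by reflexivity.
      rewrite HHdef in *.
      assert (Eq : V + k * (V * - (S / rt) - V * P / rt) * Q + V * P / S + C * (P + S)
                   = (P + S) * (V / S + k * V * (rt - Q) / rt + 1)).
      { unfold C. field. split; lra. }
      assert (0 <= V + k * (V * - (S / rt) - V * P / rt) * Q + V * P / S + C * (P + S)).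
      { rewrite Eq. apply Rmult_le_pos; [lra|].
        assert (0 < V / S) by (apply Rdiv_lt_0_compat; lra).
        assert (0 <= k * V * (rt - Q) / rt).
        { apply Rmult_le_pos; [|apply Rlt_le, Rinv_0_lt_compat; lra].
          apply Rmult_le_pos; nra. }
        lra. }
      simpl. unfold plus, mult; simpl.
      pose proof (exp_pos (C * t)). nra. }
  assert (HHc : 0 < Hf x y psi xT yT ra c).
  { unfold G in HG. pose proof (exp_pos (C * a')). pose proof (exp_pos (C * c)).
    destruct (Rlt_dec 0 (Hf x y psi xT yT ra c)) as [|Hn]; auto.
    assert (Hf x y psi xT yT ra c * exp (C * c) <= 0) by nra. nra. }
  assert (Hrc : r c = ra).
  { unfold Rmin in Hc2. destruct (Rle_dec _ _); lra. }
  assert (HPc : 0 < Pf x y psi xT yT c) by (rewrite <- (HHr c Hrc); exact HHc).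
  destruct (deriv_pos_left r c (V * Pf x y psi xT yT c / r c)) as [del [Hdel Hd]].
  { apply Hrd; [lra|]. rewrite (Hqr c Hrc). nra. }
  { rewrite Hrc. apply Rdiv_lt_0_compat; nra. }
  set (h := Rmin del (c - a') / 2).
  assert (Hh1 : Rmin del (c - a') <= del) by apply Rmin_l.
  assert (Hh2 : Rmin del (c - a') <= c - a') by apply Rmin_r.
  assert (Hh3 : 0 < Rmin del (c - a')) by (apply Rmin_glb_lt; lra).
  specialize (Hd h ltac:(unfold h; lra)).
  destruct (Hin (c - h) ltac:(unfold h; lra)) as [_ Hr'].
  lra.
Qed.
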